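(* Let $U\subset\mathbb{R}^2$ be bounded, open and contractible, and let $H:\overline{U}\times\mathbb{R}\to\overline{U}\times\mathbb{R}$ be a homeomorphism with $H(U\times\mathbb{R})=U\times\mathbb{R}$. Then the restriction of $H$ to $U\times\mathbb{R}=U^*\times\mathbb{R}$ extends to a homeomorphism $H^*:X^*\times\mathbb{R}\to X^*\times\mathbb{R}$ (with respect to the metric $d$ below) such that $H^*(\partial X^*\times\mathbb{R})=\partial X^*\times\mathbb{R}$, and $H^*$ extends further to a homeomorphism of the two-point compactification $(X^*\times\mathbb{R})\cup\{\infty,-\infty\}$.
   Context: For $x,y\in U$ let $d^*(x,y)$ be the infimum of the Euclidean diameters of paths in $U$ from $x$ to $y$; this is a metric on $U$. Write $U^*=(U,d^* )$, let $(X^*,d^* )$ be its metric completion and $\partial X^*=X^*\setminus U^*$. $X^*\times\mathbb{R}$ carries the metric $d((x,s),(y,t))=\max(d^*(x,y),|s-t|)$. The space $(X^*\times\mathbb{R})\cup\{\infty,-\infty\}$ is obtained by adjoining one point for each end of $\mathbb{R}$: a sequence $(y_n,t_n)$ converges to $\infty$ iff $t_n\to+\infty$, and to $-\infty$ iff $t_n\to-\infty$. *)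

(* Defs.v *)
From Stdlib Require Import Reals.
Open Scope R_scope.

Definition pt2 := (R * R)%type.
Definition pt3 := (pt2 * R)%type.

Definition dist2 (p q : pt2) : R :=
  sqrt ((fst p - fst q)^2 + (snd p - snd q)^2).
Definition dist3 (p q : pt3) : R :=
  sqrt ((fst (fst p) - fst (fst q))^2 + (snd (fst p) - snd (fst q))^2
        + (snd p - snd q)^2).

Definition bounded2 (U : pt2 -> Prop) : Prop :=
  exists M, forall p, U p -> dist2 p (0,0) <= M.
Definition open2 (U : pt2 -> Prop) : Prop :=
  forall p, U p -> exists r, 0 < r /\ forall q, dist2 p q < r -> U q.
Definition closure2 (U : pt2 -> Prop) (p : pt2) : Prop :=
  forall eps, 0 < eps -> exists q, U q /\ dist2 p q < eps.

Definition contractible2 (U : pt2 -> Prop) : Prop :=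
  exists (p0 : pt2) (F : R -> pt2 -> pt2),
    U p0 /\
    (forall t x, 0 <= t <= 1 -> U x -> U (F t x)) /\
    (forall x, U x -> F 0 x = x) /\
    (forall x, U x -> F 1 x = p0) /\
    (forall t x, 0 <= t <= 1 -> U x ->
       forall eps, 0 < eps -> exists delta, 0 < delta /\
         forall s y, 0 <= s <= 1 -> U y -> Rabs (s - t) < delta ->
           dist2 x y < delta -> dist2 (F t x) (F s y) < eps).

Definition cont3_on (S : pt3 -> Prop) (f : pt3 -> pt3) : Prop :=
  forall p, S p -> forall eps, 0 < eps -> exists delta, 0 < delta /\
    forall q, S q -> dist3 p q < delta -> dist3 (f p) (f q) < eps.

Definition homeo3_on (S : pt3 -> Prop) (H : pt3 -> pt3) : Prop :=
  exists G : pt3 -> pt3,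
    (forall p, S p -> S (H p)) /\ (forall p, S p -> S (G p)) /\
    (forall p, S p -> G (H p) = p) /\ (forall p, S p -> H (G p) = p) /\
    cont3_on S H /\ cont3_on S G.

Definition is_path_in (U : pt2 -> Prop) (x y : pt2) (g : R -> pt2) : Prop :=
  g 0 = x /\ g 1 = y /\ (forall s, 0 <= s <= 1 -> U (g s)) /\
  (forall s, 0 <= s <= 1 -> forall eps, 0 < eps -> exists delta, 0 < delta /\
     forall s', 0 <= s' <= 1 -> Rabs (s - s') < delta -> dist2 (g s) (g s') < eps).

Definition diam_of_path (g : R -> pt2) (D : R) : Prop :=
  is_lub (fun r => exists s t, 0 <= s <= 1 /\ 0 <= t <= 1 /\ r = dist2 (g s) (g t)) D.

Definition is_glb (E : R -> Prop) (m : R) : Prop :=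
  (forall x, E x -> m <= x) /\ (forall b, (forall x, E x -> b <= x) -> b <= m).

(* d^*(x,y) = r : the infimum of Euclidean diameters of paths in U from x to y *)
Definition dstar_is (U : pt2 -> Prop) (x y : pt2) (r : R) : Prop :=
  is_glb (fun D => exists g, is_path_in U x y g /\ diam_of_path g D) r.

Definition Upts (U : pt2 -> Prop) := {p : pt2 | U p}.

Definition is_metric {X : Type} (d : X -> X -> R) : Prop :=
  (forall x y, 0 <= d x y) /\ (forall x y, d x y = 0 <-> x = y) /\
  (forall x y, d x y = d y x) /\ (forall x y z, d x z <= d x y + d y z).

Definition cauchy_seq {X : Type} (d : X -> X -> R) (u : nat -> X) : Prop :=
  forall eps, 0 < eps -> exists N, forall m n, (N <= m)%nat -> (N <= n)%nat ->
    d (u m) (u n) < eps.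
Definition seq_conv {X : Type} (d : X -> X -> R) (u : nat -> X) (l : X) : Prop :=
  forall eps, 0 < eps -> exists N, forall n, (N <= n)%nat -> d (u n) l < eps.
Definition complete_metric {X : Type} (d : X -> X -> R) : Prop :=
  forall u, cauchy_seq d u -> exists l, seq_conv d u l.

Definition is_completion_of_Ustar (U : pt2 -> Prop) (X : Type)
  (d : X -> X -> R) (iota : Upts U -> X) : Prop :=
  is_metric d /\ complete_metric d /\
  (forall x y : Upts U, dstar_is U (proj1_sig x) (proj1_sig y) (d (iota x) (iota y))) /\
  (forall z eps, 0 < eps -> exists x, d z (iota x) < eps).

Definition dmax {X : Type} (d : X -> X -> R) (p q : X * R) : R :=
  Rmax (d (fst p) (fst q)) (Rabs (snd p - snd q)).

Definition cont_metric {A B : Type} (dA : A -> A -> R) (dB : B -> B -> R)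
  (f : A -> B) : Prop :=
  forall p eps, 0 < eps -> exists delta, 0 < delta /\
    forall q, dA p q < delta -> dB (f p) (f q) < eps.

Definition homeo_metric {A : Type} (dA : A -> A -> R) (f : A -> A) : Prop :=
  exists g : A -> A, (forall p, g (f p) = p) /\ (forall p, f (g p) = p) /\
    cont_metric dA dA f /\ cont_metric dA dA g.

(* two-point compactification (X x R) u {+oo, -oo} *)
Inductive ext2 (A : Type) : Type :=
| Fin : A -> ext2 A
| PInf : ext2 A
| NInf : ext2 A.
Arguments Fin {A} _.
Arguments PInf {A}.
Arguments NInf {A}.

Definition ext_conv {X : Type} (d : X -> X -> R) (u : nat -> ext2 (X * R))
  (l : ext2 (X * R)) : Prop :=
  match l with
  | Fin p => forall eps, 0 < eps -> exists N, forall n, (N <= n)%nat ->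
      exists q, u n = Fin q /\ dmax d q p < eps
  | PInf => forall M, exists N, forall n, (N <= n)%nat ->
      u n = PInf \/ exists q, u n = Fin q /\ M < snd q
  | NInf => forall M, exists N, forall n, (N <= n)%nat ->
      u n = NInf \/ exists q, u n = Fin q /\ snd q < M
  end.

(* homeomorphism of the (sequentially defined) two-point compactification *)
Definition homeo_ext {X : Type} (d : X -> X -> R) (E : ext2 (X * R) -> ext2 (X * R)) : Prop :=
  exists F : ext2 (X * R) -> ext2 (X * R),
    (forall a, F (E a) = a) /\ (forall a, E (F a) = a) /\
    (forall u l, ext_conv d u l -> ext_conv d (fun n => E (u n)) (E l)) /\
    (forall u l, ext_conv d u l -> ext_conv d (fun n => F (u n)) (F l)).

(* Main.v *)
Require Import Defs.
From Stdlib Require Import Reals Lra Lia Psatz Classical ClassicalEpsilon ProofIrrelevance.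
Open Scope R_scope.

Lemma sqrt_le_of_sq x y : 0 <= y -> x <= y * y -> sqrt x <= y.
Proof. intros Hy Hx. rewrite <- (sqrt_square y Hy). apply sqrt_le_1_alt. exact Hx. Qed.

Lemma le_sqrt_of x y : 0 <= x -> x * x <= y -> x <= sqrt y.
Proof. intros Hx Hy. rewrite <- (sqrt_square x Hx). apply sqrt_le_1_alt. exact Hy. Qed.

Lemma sqrt_sq_id x : 0 <= x -> sqrt x * sqrt x = x.
Proof. intros; apply sqrt_sqrt; auto. Qed.

Lemma Rabs_sq x : Rabs x * Rabs x = x ^ 2.
Proof. rewrite <- Rabs_mult. rewrite Rabs_right. ring. apply Rle_ge. replace (x*x) with (x^2) by ring. apply pow2_ge_0. Qed.

Ltac sqnn := repeat match goal with
  | |- context [?x ^ 2] => lazymatch goal with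
      | _ : 0 <= x ^ 2 |- _ => fail
      | _ => pose proof (pow2_ge_0 x) end end.

Lemma d2_nonneg p q : 0 <= dist2 p q.
Proof. apply sqrt_pos. Qed.

Lemma d2_sym p q : dist2 p q = dist2 q p.
Proof. unfold dist2. f_equal. ring. Qed.

Lemma d2_refl p : dist2 p p = 0.
Proof. unfold dist2. replace ((fst p - fst p) ^ 2 + (snd p - snd p) ^ 2) with 0 by ring. apply sqrt_0. Qed.

Lemma d2_sq p q : dist2 p q * dist2 p q = (fst p - fst q)^2 + (snd p - snd q)^2.
Proof. unfold dist2. apply sqrt_sqrt. apply Rplus_le_le_0_compat; apply pow2_ge_0. Qed.

Lemma d2_tri p q r : dist2 p r <= dist2 p q + dist2 q r.
Proof.
  pose proof (d2_sq p q) as A. pose proof (d2_sq q r) as B.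
  pose proof (d2_nonneg p q). pose proof (d2_nonneg q r).
  set (s1 := dist2 p q) in *. set (s2 := dist2 q r) in *.
  set (x1 := fst p - fst q) in *. set (y1 := snd p - snd q) in *.
  set (x2 := fst q - fst r) in *. set (y2 := snd q - snd r) in *.
  assert (C : x1 * x2 + y1 * y2 <= s1 * s2).
  { destruct (Rle_lt_dec (x1 * x2 + y1 * y2) 0). nra.
    assert ((x1 * x2 + y1 * y2) * (x1 * x2 + y1 * y2) <= (s1 * s2) * (s1 * s2)).
    { replace ((s1*s2)*(s1*s2)) with ((s1*s1)*(s2*s2)) by ring. rewrite A, B.
      pose proof (pow2_ge_0 (x1*y2 - x2*y1)).
      assert (((x1 ^ 2 + y1 ^ 2) * (x2 ^ 2 + y2 ^ 2)) - (x1 * x2 + y1 * y2) * (x1 * x2 + y1 * y2) = (x1*y2 - x2*y1)^2) by ring.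
      lra. }
    assert (0 <= s1 * s2) by (apply Rmult_le_pos; auto).
    destruct (Rle_lt_dec (x1 * x2 + y1 * y2) (s1 * s2)) as [|Hlt]; auto.
    assert ((s1 * s2) * (s1 * s2) < (x1 * x2 + y1 * y2) * (x1 * x2 + y1 * y2)).
    { apply Rmult_le_0_lt_compat; auto. }
    lra. }
  unfold dist2. apply sqrt_le_of_sq. lra.
  replace (fst p - fst r) with (x1 + x2) by (unfold x1, x2; ring).
  replace (snd p - snd r) with (y1 + y2) by (unfold y1, y2; ring).
  nra.
Qed.

Lemma abs_fst_le_d2 p q : Rabs (fst p - fst q) <= dist2 p q.
Proof. apply le_sqrt_of. apply Rabs_pos. rewrite Rabs_sq. sqnn; lra. Qed.
Lemma abs_snd_le_d2 p q : Rabs (snd p - snd q) <= dist2 p q.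
Proof. apply le_sqrt_of. apply Rabs_pos. rewrite Rabs_sq. sqnn; lra. Qed.

Lemma d2_le_abs p q : dist2 p q <= Rabs (fst p - fst q) + Rabs (snd p - snd q).
Proof.
  apply sqrt_le_of_sq. pose proof (Rabs_pos (fst p - fst q)); pose proof (Rabs_pos (snd p - snd q)); lra.
  pose proof (Rabs_pos (fst p - fst q)); pose proof (Rabs_pos (snd p - snd q)).
  assert (E1: (fst p - fst q)^2 = Rabs (fst p - fst q) * Rabs (fst p - fst q)) by (rewrite Rabs_sq; ring).
  assert (E2: (snd p - snd q)^2 = Rabs (snd p - snd q) * Rabs (snd p - snd q)) by (rewrite Rabs_sq; ring).
  rewrite E1, E2. nra.
Qed.

Lemma d3_le p q : dist3 p q <= dist2 (fst p) (fst q) + Rabs (snd p - snd q).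
Proof.
  pose proof (d2_sq (fst p) (fst q)). pose proof (d2_nonneg (fst p) (fst q)).
  pose proof (Rabs_pos (snd p - snd q)).
  apply sqrt_le_of_sq. lra.
  assert (E2: (snd p - snd q)^2 = Rabs (snd p - snd q) * Rabs (snd p - snd q)) by (rewrite Rabs_sq; ring).
  rewrite E2. nra.
Qed.

Lemma d2_le_d3 p q : dist2 (fst p) (fst q) <= dist3 p q.
Proof.
  pose proof (d2_nonneg (fst p) (fst q)). apply le_sqrt_of. auto.
  rewrite d2_sq. sqnn; lra.
Qed.

Lemma abs_snd_le_d3 p q : Rabs (snd p - snd q) <= dist3 p q.
Proof.
  apply le_sqrt_of. apply Rabs_pos. rewrite Rabs_sq. sqnn; lra.
Qed.

Lemma dstar_lower U x y m : dstar_is U x y m -> dist2 x y <= m.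
Proof.
  intros [Hlb Hglb]. apply Hglb. intros D [g [[H0 [H1 _]] [Hub _]]].
  apply Hub. exists 0, 1. rewrite H0, H1. repeat split; lra.
Qed.

Lemma dstar_upper U x y m g D : dstar_is U x y m -> is_path_in U x y g ->
  (forall s t, 0 <= s <= 1 -> 0 <= t <= 1 -> dist2 (g s) (g t) <= D) -> m <= D.
Proof.
  intros [Hlb Hglb] Hp HD.
  destruct (completeness (fun r => exists s t, 0 <= s <= 1 /\ 0 <= t <= 1 /\ r = dist2 (g s) (g t))) as [L HL].
  - exists D. intros r (s & t & Hs & Ht & ->). auto.
  - exists (dist2 (g 0) (g 0)). exists 0, 0. repeat split; lra.
  - apply Rle_trans with L. apply Hlb. exists g. split; auto.
    apply HL. intros r (s & t & Hs & Ht & ->). auto.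
Qed.

Lemma dstar_path U x y m D : dstar_is U x y m -> m < D ->
  exists g, is_path_in U x y g /\ forall s t, 0 <= s <= 1 -> 0 <= t <= 1 -> dist2 (g s) (g t) < D.
Proof.
  intros [Hlb Hglb] HmD.
  destruct (classic (exists D0 g, is_path_in U x y g /\ diam_of_path g D0 /\ D0 < D)) as [(D0 & g & Hp & Hd & Hlt)|Hno].
  - exists g. split; auto. intros s t Hs Ht. destruct Hd as [Hub _].
    apply Rle_lt_trans with D0; auto. apply Hub. exists s, t. auto.
  - exfalso. assert (D <= m). { apply Hglb. intros D0 [g [Hp Hd]].
      destruct (Rle_lt_dec D D0); auto. exfalso; apply Hno; exists D0, g; auto. }
    lra.
Qed.

Lemma dstar_ex U x y m : dstar_is U x y m -> exists g, is_path_in U x y g.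
Proof. intros H. destruct (dstar_path U x y m (m+1) H) as [g [Hg _]]. lra. eauto. Qed.

Lemma dmax_fst {X} (d : X -> X -> R) p q : d (fst p) (fst q) <= dmax d p q.
Proof. apply Rmax_l. Qed.
Lemma dmax_snd {X} (d : X -> X -> R) p q : Rabs (snd p - snd q) <= dmax d p q.
Proof. apply Rmax_r. Qed.
Lemma dmax_lt {X} (d : X -> X -> R) p q e : d (fst p) (fst q) < e -> Rabs (snd p - snd q) < e -> dmax d p q < e.
Proof. intros; apply Rmax_lub_lt; auto. Qed.
Lemma dmax_le {X} (d : X -> X -> R) p q e : d (fst p) (fst q) <= e -> Rabs (snd p - snd q) <= e -> dmax d p q <= e.
Proof. intros; apply Rmax_lub; auto. Qed.

Lemma dmax_metric {X} (d : X -> X -> R) : is_metric d -> is_metric (dmax d).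
Proof.
  intros (Hnn & Hz & Hs & Ht). unfold dmax. repeat split.
  - intros; apply Rle_trans with (Rabs (snd x - snd y)); [apply Rabs_pos | apply Rmax_r].
  - intros E. pose proof (Rmax_l (d (fst x) (fst y)) (Rabs (snd x - snd y))).
    pose proof (Rmax_r (d (fst x) (fst y)) (Rabs (snd x - snd y))).
    pose proof (Hnn (fst x) (fst y)). pose proof (Rabs_pos (snd x - snd y)).
    assert (d (fst x) (fst y) = 0) by lra. assert (Rabs (snd x - snd y) = 0) by lra.
    apply Hz in H3. destruct x as [x1 x2], y as [y1 y2]; simpl in *. f_equal; auto.
    destruct (Req_dec (x2 - y2) 0) as [E0|E0]; [lra| apply Rabs_pos_lt in E0; lra].
  - intros ->. rewrite (proj2 (Hz _ _) eq_refl). replace (snd y - snd y) with 0 by ring.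
    rewrite Rabs_R0. apply Rmax_left. lra.
  - intros. rewrite Hs. rewrite <- Rabs_Ropp. f_equal. f_equal. ring.
  - intros. apply Rmax_lub.
    + apply Rle_trans with (d (fst x) (fst y) + d (fst y) (fst z)); auto.
      apply Rplus_le_compat; apply Rmax_l.
    + apply Rle_trans with (Rabs (snd x - snd y) + Rabs (snd y - snd z)).
      replace (snd x - snd z) with ((snd x - snd y) + (snd y - snd z)) by ring. apply Rabs_triang.
      apply Rplus_le_compat; apply Rmax_r.
Qed.

Lemma dmax_complete {X} (d : X -> X -> R) : complete_metric d -> complete_metric (dmax d).
Proof.
  intros Hc u Hu.
  destruct (Hc (fun n => fst (u n))) as [l1 Hl1].
  { intros e He. destruct (Hu e He) as [N HN]. exists N. intros m n Hm Hn.
    apply Rle_lt_trans with (dmax d (u m) (u n)). apply dmax_fst. auto. }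
  destruct (R_complete (fun n => snd (u n))) as [l2 Hl2].
  { intros e He. destruct (Hu e He) as [N HN]. exists N. intros n m Hn Hm.
    unfold Rdist. apply Rle_lt_trans with (dmax d (u n) (u m)). apply dmax_snd. apply HN; lia. }
  exists (l1, l2). intros e He. destruct (Hl1 e He) as [N1 HN1]. destruct (Hl2 e He) as [N2 HN2].
  exists (max N1 N2). intros n Hn. apply dmax_lt; simpl.
  apply HN1; lia. specialize (HN2 n ltac:(lia)). unfold Rdist in HN2. auto.
Qed.

Lemma inv_small e : 0 < e -> exists N, forall n, (N <= n)%nat -> / (INR n + 1) < e.
Proof.
  intros He. destruct (archimed_cor1 e He) as [N [HN HN0]]. exists N. intros n Hn.
  apply Rle_lt_trans with (/ INR N); auto. apply Rinv_le_contravar.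
  apply lt_0_INR; auto. apply le_INR in Hn. lra.
Qed.

Lemma inv_pos n : 0 < / (INR n + 1).
Proof. apply Rinv_0_lt_compat. pose proof (pos_INR n). lra. Qed.

Definition LCond {Z Y} (rho : Z -> Z -> R) (iota : Y -> Z) (h : Y -> Y) :=
  forall p e, 0 < e -> exists delta, 0 < delta /\ forall a b,
    rho (iota a) p < delta -> rho (iota b) p < delta -> rho (iota (h a)) (iota (h b)) < e.

Definition IsExt {Z Y} (rho : Z -> Z -> R) (iota : Y -> Z) (h : Y -> Y) (F : Z -> Z) :=
  forall p e, 0 < e -> exists delta, 0 < delta /\ forall a,
    rho (iota a) p < delta -> rho (iota (h a)) (F p) <= e.

Definition Dense {Z Y} (rho : Z -> Z -> R) (iota : Y -> Z) :=
  forall p e, 0 < e -> exists a, rho p (iota a) < e.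

Lemma ext_exists {Z Y} (rho : Z -> Z -> R) (iota : Y -> Z) (h : Y -> Y) :
  is_metric rho -> complete_metric rho -> Dense rho iota -> LCond rho iota h ->
  exists F, IsExt rho iota h F.
Proof.
  intros (Hnn & Hz & Hs & Ht) Hc Hd Hl.
  assert (Hp : forall p, exists w, forall e, 0 < e -> exists delta, 0 < delta /\ forall a,
    rho (iota a) p < delta -> rho (iota (h a)) w <= e).
  { intros p.
    assert (Ha : forall n : nat, exists a, rho p (iota a) < / (INR n + 1)) by (intros; apply Hd; apply inv_pos).
    destruct (choice _ Ha) as [a Ha'].
    destruct (Hc (fun n => iota (h (a n)))) as [w Hw].
    { intros e He. destruct (Hl p e He) as [dl [Hdl Hdl']].
      destruct (inv_small dl Hdl) as [N HN]. exists N. intros m n Hm Hn.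
      apply Hdl'. rewrite Hs. apply Rlt_trans with (/ (INR m + 1)); auto.
      rewrite Hs. apply Rlt_trans with (/ (INR n + 1)); auto. }
    exists w. intros e He. destruct (Hl p (e/2) ltac:(lra)) as [dl [Hdl Hdl']].
    exists dl. split; auto. intros b Hb.
    destruct (inv_small dl Hdl) as [N1 HN1]. destruct (Hw (e/2) ltac:(lra)) as [N2 HN2].
    specialize (HN1 (max N1 N2) ltac:(lia)). specialize (HN2 (max N1 N2) ltac:(lia)).
    specialize (Ha' (max N1 N2)).
    apply Rle_trans with (rho (iota (h b)) (iota (h (a (max N1 N2)))) + rho (iota (h (a (max N1 N2)))) w); auto.
    assert (rho (iota (h b)) (iota (h (a (max N1 N2)))) < e/2).
    { apply Hdl'; auto. rewrite Hs. lra. }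
    lra. }
  destruct (choice _ Hp) as [F HF]. exists F. exact HF.
Qed.

Lemma ext_on {Z Y} (rho : Z -> Z -> R) (iota : Y -> Z) h F :
  is_metric rho -> IsExt rho iota h F -> forall a, F (iota a) = iota (h a).
Proof.
  intros (Hnn & Hz & Hs & Ht) HF a.
  assert (rho (iota (h a)) (F (iota a)) = 0).
  { destruct (Rle_lt_dec (rho (iota (h a)) (F (iota a))) 0). specialize (Hnn (iota (h a)) (F (iota a))). lra.
    destruct (HF (iota a) _ r) as [dl [Hdl H]].
    specialize (H a). rewrite (proj2 (Hz _ _) eq_refl) in H.
    exfalso. specialize (H Hdl). 
    assert (rho (iota (h a)) (F (iota a)) / 2 < rho (iota (h a)) (F (iota a))) by lra.
    destruct (HF (iota a) (rho (iota (h a)) (F (iota a)) / 2) ltac:(lra)) as [d2 [Hd2 H2]].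
    specialize (H2 a). rewrite (proj2 (Hz _ _) eq_refl) in H2. specialize (H2 Hd2). lra. }
  apply Hz in H. auto.
Qed.

Lemma ext_cont {Z Y} (rho : Z -> Z -> R) (iota : Y -> Z) h F :
  is_metric rho -> Dense rho iota -> IsExt rho iota h F -> cont_metric rho rho F.
Proof.
  intros (Hnn & Hz & Hs & Ht) Hd HF p e He.
  destruct (HF p (e/3) ltac:(lra)) as [dl [Hdl H1]].
  exists (dl/2). split. lra. intros q Hq.
  destruct (HF q (e/3) ltac:(lra)) as [dq [Hdq H2]].
  destruct (Hd q (Rmin dq (dl/2)) ltac:(apply Rmin_pos; lra)) as [a Ha].
  pose proof (Rmin_l dq (dl/2)). pose proof (Rmin_r dq (dl/2)).
  rewrite Hs in Ha.
  assert (A1 : rho (iota (h a)) (F p) <= e/3).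
  { apply H1. apply Rle_lt_trans with (rho (iota a) q + rho q p); auto. rewrite (Hs q p). lra. }
  assert (A2 : rho (iota (h a)) (F q) <= e/3) by (apply H2; lra).
  apply Rle_lt_trans with (rho (F p) (iota (h a)) + rho (iota (h a)) (F q)); auto.
  rewrite Hs. lra.
Qed.

Lemma dense_id {Z Y} (rho : Z -> Z -> R) (iota : Y -> Z) F :
  is_metric rho -> Dense rho iota -> cont_metric rho rho F -> (forall a, F (iota a) = iota a) ->
  forall p, F p = p.
Proof.
  intros (Hnn & Hz & Hs & Ht) Hd HF Hid p. apply Hz.
  destruct (Rle_lt_dec (rho (F p) p) 0) as [|Hpos]. specialize (Hnn (F p) p). lra.
  exfalso. set (r := rho (F p) p) in *.
  destruct (HF p (r/2) ltac:(lra)) as [dl [Hdl H1]].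
  destruct (Hd p (Rmin dl (r/2)) ltac:(apply Rmin_pos; lra)) as [a Ha].
  pose proof (Rmin_l dl (r/2)). pose proof (Rmin_r dl (r/2)).
  specialize (H1 (iota a) ltac:(lra)). rewrite Hid in H1.
  pose proof (Ht (F p) (iota a) p). rewrite (Hs (iota a) p) in H2. unfold r in *. lra.
Qed.

Lemma cont_comp {A} (dA : A -> A -> R) f g : cont_metric dA dA f -> cont_metric dA dA g ->
  cont_metric dA dA (fun x => g (f x)).
Proof.
  intros Hf Hg p e He. destruct (Hg (f p) e He) as [d1 [Hd1 H1]].
  destruct (Hf p d1 Hd1) as [d2 [Hd2 H2]]. exists d2. split; auto.
Qed.

Lemma d_ge_d2 U X (d : X -> X -> R) iota : is_completion_of_Ustar U X d iota ->
  forall x y, dist2 (proj1_sig x) (proj1_sig y) <= d (iota x) (iota y).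
Proof. intros (_ & _ & Hds & _) x y. apply dstar_lower with U. auto. Qed.

Lemma iota_eq U X (d : X -> X -> R) iota : is_completion_of_Ustar U X d iota ->
  forall x y : Upts U, proj1_sig x = proj1_sig y -> iota x = iota y.
Proof.
  intros ((Hnn & Hz & _) & _ & Hds & _) x y E. apply Hz.
  apply Rle_antisym; [|apply Hnn].
  apply (dstar_upper U (proj1_sig x) (proj1_sig y) _ (fun _ => proj1_sig x) 0 (Hds x y)).
  - repeat split; auto. intros; apply (proj2_sig x). intros. exists 1. split. lra. intros. rewrite d2_refl. auto.
  - intros. rewrite d2_refl. lra.
Qed.

Lemma U_closure U p : U p -> closure2 U p.
Proof. intros Hp e He. exists p. rewrite d2_refl. auto. Qed.

Lemma point_of U X (d : X -> X -> R) iota : is_completion_of_Ustar U X d iota ->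
  forall z, exists P, closure2 U P /\ forall e, 0 < e -> exists delta, 0 < delta /\
    forall x, d (iota x) z < delta -> dist2 (proj1_sig x) P < e.
Proof.
  intros HX z. pose proof HX as ((Hnn & Hz & Hs & Ht) & _ & Hds & Hden).
  assert (Ha : forall n : nat, exists x, d z (iota x) < / (INR n + 1)) by (intros; apply Hden; apply inv_pos).
  destruct (choice _ Ha) as [x Hx].
  assert (Hcl : forall m n, dist2 (proj1_sig (x m)) (proj1_sig (x n)) < / (INR m + 1) + / (INR n + 1)).
  { intros m n. eapply Rle_lt_trans. apply (d_ge_d2 _ _ _ _ HX).
    eapply Rle_lt_trans. apply (Ht _ z). rewrite Hs. pose proof (Hx m); pose proof (Hx n); lra. }
  assert (Cc : forall f : R * R -> R, (forall p q, Rabs (f p - f q) <= dist2 p q) ->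
     Cauchy_crit (fun n => f (proj1_sig (x n)))).
  { intros f Hf e He. destruct (inv_small (e/2) ltac:(lra)) as [N HN]. exists N. intros n m Hn Hm.
    unfold Rdist. eapply Rle_lt_trans. apply Hf. eapply Rlt_le_trans. apply Hcl.
    pose proof (HN n Hn); pose proof (HN m Hm). lra. }
  destruct (R_complete _ (Cc fst abs_fst_le_d2)) as [l1 Hl1].
  destruct (R_complete _ (Cc snd abs_snd_le_d2)) as [l2 Hl2].
  assert (Hconv : forall e, 0 < e -> exists N, forall n, (N <= n)%nat -> dist2 (proj1_sig (x n)) (l1, l2) < e).
  { intros e He. destruct (Hl1 (e/2) ltac:(lra)) as [N1 H1]. destruct (Hl2 (e/2) ltac:(lra)) as [N2 H2].
    exists (max N1 N2). intros n Hn. eapply Rle_lt_trans. apply d2_le_abs. simpl.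
    specialize (H1 n ltac:(lia)); specialize (H2 n ltac:(lia)). unfold Rdist in *. lra. }
  exists (l1, l2). split.
  - intros e He. destruct (Hconv e He) as [N HN]. exists (proj1_sig (x N)). split.
    apply (proj2_sig (x N)). rewrite d2_sym. apply HN. lia.
  - intros e He. exists (e/4). split. lra. intros y Hy.
    destruct (Hconv (e/4) ltac:(lra)) as [N1 HN1]. destruct (inv_small (e/4) ltac:(lra)) as [N2 HN2].
    set (n := max N1 N2). specialize (HN1 n ltac:(unfold n; lia)). specialize (HN2 n ltac:(unfold n; lia)).
    eapply Rle_lt_trans. apply d2_tri with (q := proj1_sig (x n)).
    assert (dist2 (proj1_sig y) (proj1_sig (x n)) <= d (iota y) z + d z (iota (x n))).
    { eapply Rle_trans. apply (d_ge_d2 _ _ _ _ HX). apply Ht. }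
    pose proof (Hx n). lra.
Qed.

Lemma convex_abs s u t dl r : 0 <= r <= 1 -> Rabs (s - t) < dl -> Rabs (u - t) < dl ->
  Rabs (s + r * (u - s) - t) < dl.
Proof.
  intros Hr H1 H2. set (m := Rmax (Rabs (s - t)) (Rabs (u - t))).
  assert (m < dl) by (apply Rmax_lub_lt; auto).
  pose proof (Rmax_l (Rabs (s - t)) (Rabs (u - t))). pose proof (Rmax_r (Rabs (s - t)) (Rabs (u - t))).
  replace (s + r * (u - s) - t) with ((1 - r) * (s - t) + r * (u - t)) by ring.
  eapply Rle_lt_trans. apply Rabs_triang. rewrite !Rabs_mult.
  rewrite (Rabs_right r) by lra. rewrite (Rabs_right (1 - r)) by lra.
  assert ((1 - r) * Rabs (s - t) <= (1 - r) * m) by (apply Rmult_le_compat_l; unfold m in *; lra).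
  assert (r * Rabs (u - t) <= r * m) by (apply Rmult_le_compat_l; unfold m in *; lra).
  lra.
Qed.

Definition SK (U : pt2 -> Prop) (p : pt3) := closure2 U (fst p).

Definition Good (U : pt2 -> Prop) (H : pt3 -> pt3) :=
  (forall p, SK U p -> SK U (H p)) /\ cont3_on (SK U) H /\
  (forall p, SK U p -> U (fst p) -> U (fst (H p))).

Lemma path_img_cont U H g x y s u : Good U H -> is_path_in U x y g ->
  forall r, 0 <= r <= 1 -> forall e, 0 < e -> exists delta, 0 < delta /\
    forall r', 0 <= r' <= 1 -> Rabs (r - r') < delta ->
      dist3 (H (g r, s + r * (u - s))) (H (g r', s + r' * (u - s))) < e.
Proof.
  intros (HS & Hc & HU) (H0 & H1 & HgU & Hgc) r Hr e He.
  destruct (Hc (g r, s + r * (u - s))) with (eps := e) as [d1 [Hd1 Hd1']]; auto.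
  { unfold SK; simpl. apply U_closure; auto. }
  destruct (Hgc r Hr (d1/2) ltac:(lra)) as [d2 [Hd2 Hd2']].
  set (k := Rabs (u - s) + 1). assert (Hk : 0 < k) by (unfold k; pose proof (Rabs_pos (u - s)); lra).
  exists (Rmin d2 (d1 / (2 * k))). split. apply Rmin_pos; auto. apply Rdiv_lt_0_compat; lra.
  intros r' Hr' Hrr. pose proof (Rmin_l d2 (d1 / (2 * k))). pose proof (Rmin_r d2 (d1 / (2 * k))).
  apply Hd1'. unfold SK; simpl. apply U_closure; auto.
  eapply Rle_lt_trans. apply d3_le. simpl.
  assert (A : dist2 (g r) (g r') < d1 / 2) by (apply Hd2'; auto; lra).
  assert (B : Rabs (s + r * (u - s) - (s + r' * (u - s))) <= d1 / 2).
  { replace (s + r * (u - s) - (s + r' * (u - s))) with ((r - r') * (u - s)) by ring.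
    rewrite Rabs_mult. apply Rle_trans with ((d1 / (2 * k)) * k).
    apply Rmult_le_compat; try apply Rabs_pos; unfold k in *; lra.
    replace (d1 / (2 * k) * k) with (d1 / 2) by (field; lra). lra. }
  lra.
Qed.

Lemma img_path U H g x y s u : Good U H -> is_path_in U x y g ->
  is_path_in U (fst (H (x, s))) (fst (H (y, u))) (fun r => fst (H (g r, s + r * (u - s)))).
Proof.
  intros HG Hp. pose proof Hp as (H0 & H1 & HgU & Hgc). pose proof HG as (HS & Hc & HU).
  repeat split.
  - rewrite H0. f_equal. f_equal. f_equal. ring.
  - rewrite H1. f_equal. f_equal. f_equal. ring.
  - intros r Hr. apply HU. unfold SK; simpl. apply U_closure; auto. simpl; auto.
  - intros r Hr e He. destruct (path_img_cont U H g x y s u HG Hp r Hr e He) as [dl [Hdl Hdl']].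
    exists dl. split; auto. intros r' Hr' Hrr. eapply Rle_lt_trans. apply d2_le_d3. auto.
Qed.

Definition iY {U : pt2 -> Prop} {X} (iota : Upts U -> X) (a : Upts U * R) : X * R := (iota (fst a), snd a).

Definition hmap (U : pt2 -> Prop) (H : pt3 -> pt3) (HU' : forall (x : Upts U) t, U (fst (H (proj1_sig x, t))))
  (a : Upts U * R) : Upts U * R :=
  (exist U (fst (H (proj1_sig (fst a), snd a))) (HU' (fst a) (snd a)), snd (H (proj1_sig (fst a), snd a))).

Lemma good_HU U H : Good U H -> forall (x : Upts U) t, U (fst (H (proj1_sig x, t))).
Proof. intros (HS & Hc & HU) x t. apply HU. unfold SK; simpl. apply U_closure, (proj2_sig x). apply (proj2_sig x). Qed.

Lemma LC_h U X d iota H (HG : Good U H) HU' : is_completion_of_Ustar U X d iota ->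
  LCond (dmax d) (iY iota) (hmap U H HU').
Proof.
  intros HX [z t] e He. pose proof HX as ((Hnn & Hz & Hs & Ht) & _ & Hds & Hden).
  destruct (point_of U X d iota HX z) as [P [HP HPp]].
  pose proof HG as (HS & Hc & HU).
  destruct (Hc (P, t)) with (eps := e/4) as [d1 [Hd1 Hd1']]; [exact HP| lra |].
  destruct (HPp (d1/4) ltac:(lra)) as [d2 [Hd2 Hd2']].
  exists (Rmin d2 (d1/8)). split. apply Rmin_pos; lra.
  pose proof (Rmin_l d2 (d1/8)). pose proof (Rmin_r d2 (d1/8)).
  intros [x s] [y u] Ha Hb. unfold iY in Ha, Hb; simpl in Ha, Hb.
  pose proof (Rle_lt_trans _ _ _ (dmax_fst d (iota x, s) (z, t)) Ha) as Hxz; simpl in Hxz.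
  pose proof (Rle_lt_trans _ _ _ (dmax_snd d (iota x, s) (z, t)) Ha) as Hst; simpl in Hst.
  pose proof (Rle_lt_trans _ _ _ (dmax_fst d (iota y, u) (z, t)) Hb) as Hyz; simpl in Hyz.
  pose proof (Rle_lt_trans _ _ _ (dmax_snd d (iota y, u) (z, t)) Hb) as Hut; simpl in Hut.
  assert (Hxy : d (iota x) (iota y) < d1/4).
  { eapply Rle_lt_trans. apply (Ht _ z). rewrite (Hs z). lra. }
  destruct (dstar_path U _ _ _ (d1/4) (Hds x y) Hxy) as [g [Hgp Hgd]].
  pose proof Hgp as (Hg0 & Hg1 & HgU & Hgc).
  assert (Hkey : forall r, 0 <= r <= 1 -> dist3 (H (P, t)) (H (g r, s + r * (u - s))) < e/4).
  { intros r Hr. apply Hd1'. unfold SK; simpl. apply U_closure; auto.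
    eapply Rle_lt_trans. apply d3_le. simpl.
    assert (dist2 P (g r) < d1/2).
    { eapply Rle_lt_trans. apply d2_tri with (q := g 0). rewrite Hg0.
      assert (dist2 (proj1_sig x) P < d1/4) by (apply Hd2'; lra).
      rewrite d2_sym in H2. rewrite <- Hg0 at 2. pose proof (Hgd 0 r ltac:(lra) Hr). lra. }
    rewrite Rabs_minus_sym. pose proof (convex_abs s u t (Rmin d2 (d1/8)) r Hr ltac:(lra) ltac:(lra)). lra. }
  assert (E0 : (g 0, s + 0 * (u - s)) = (proj1_sig x, s)) by (rewrite Hg0; f_equal; ring).
  assert (E1 : (g 1, s + 1 * (u - s)) = (proj1_sig y, u)) by (rewrite Hg1; f_equal; ring).
  unfold hmap, iY; simpl. apply dmax_lt; simpl.
  - apply Rle_lt_trans with (e/2); [|lra].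
    apply (dstar_upper U _ _ _ _ _ (Hds (exist U (fst (H (proj1_sig x, s))) (HU' x s)) (exist U (fst (H (proj1_sig y, u))) (HU' y u))) (img_path U H g _ _ s u HG Hgp)).
    intros r1 r2 Hr1 Hr2. simpl.
    eapply Rle_trans. apply d2_tri with (q := fst (H (P, t))).
    pose proof (Hkey r1 Hr1). pose proof (Hkey r2 Hr2).
    pose proof (d2_le_d3 (H (P, t)) (H (g r1, s + r1 * (u - s)))).
    pose proof (d2_le_d3 (H (P, t)) (H (g r2, s + r2 * (u - s)))).
    rewrite (d2_sym _ (fst (H (P, t)))). lra.
  - pose proof (Hkey 0 ltac:(lra)) as K0. pose proof (Hkey 1 ltac:(lra)) as K1.
    rewrite E0 in K0. rewrite E1 in K1.
    pose proof (abs_snd_le_d3 (H (P, t)) (H (proj1_sig x, s))).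
    pose proof (abs_snd_le_d3 (H (P, t)) (H (proj1_sig y, u))).
    replace (snd (H (proj1_sig x, s)) - snd (H (proj1_sig y, u))) with
      (- (snd (H (P, t)) - snd (H (proj1_sig x, s))) + (snd (H (P, t)) - snd (H (proj1_sig y, u)))) by ring.
    eapply Rle_lt_trans. apply Rabs_triang. rewrite Rabs_Ropp. lra.
Qed.

Lemma nat_above r : exists N : nat, r < INR N.
Proof.
  destruct (Rle_lt_dec r 0). exists 1%nat. simpl. lra.
  destruct (archimed_cor1 (/ r)) as [N [HN HN0]]. apply Rinv_0_lt_compat; auto.
  exists N. rewrite <- (Rinv_inv r). rewrite <- (Rinv_inv (INR N)).
  apply Rinv_lt_contravar; auto. apply Rmult_lt_0_compat. apply Rinv_0_lt_compat. apply lt_0_INR; auto.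
  apply Rinv_0_lt_compat; auto.
Qed.

Lemma d3_sym p q : dist3 p q = dist3 q p.
Proof. unfold dist3. f_equal. ring. Qed.

Lemma incr_ge (phi : nat -> nat) : (forall n, (phi n < phi (S n))%nat) -> forall n, (n <= phi n)%nat.
Proof. intros H n. induction n. lia. specialize (H n). lia. Qed.

Lemma incr_mono (phi : nat -> nat) : (forall n, (phi n < phi (S n))%nat) -> forall m n, (m <= n)%nat -> (phi m <= phi n)%nat.
Proof. intros H m n Hmn. induction Hmn. lia. specialize (H m0). lia. Qed.

Lemma Un_cv_sub u l phi : (forall n, (phi n < phi (S n))%nat) -> Un_cv u l -> Un_cv (fun n => u (phi n)) l.
Proof. intros Hp Hu e He. destruct (Hu e He) as [N HN]. exists N. intros n Hn. apply HN.
  pose proof (incr_ge phi Hp n). lia. Qed.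

Lemma subseq_conv (u : nat -> R) C : (forall n, Rabs (u n) <= C) ->
  exists phi : nat -> nat, (forall n, (phi n < phi (S n))%nat) /\ exists l, Un_cv (fun n => u (phi n)) l.
Proof.
  intros Hb. destruct (Bolzano_Weierstrass u (fun c => -C <= c <= C) (compact_P3 (-C) C)) as [l Hl].
  { intros n. specialize (Hb n). unfold Rabs in Hb; destruct (Rcase_abs (u n)); lra. }
  assert (Hp : forall Nk : nat * nat, exists p, (fst Nk <= p)%nat /\ Rabs (u p - l) < / (INR (snd Nk) + 1)).
  { intros [N k]. simpl. destruct (Hl (fun y => Rabs (y - l) < / (INR k + 1)) N) as [p [Hp1 Hp2]].
    exists (mkposreal _ (inv_pos k)). intros y Hy. exact Hy.
    exists p; auto. }
  destruct (choice _ Hp) as [pick Hpick].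
  pose (phi := fix f (n : nat) : nat := match n with O => pick (O, O) | S m => pick (S (f m), S m) end).
  exists phi. split.
  - intros n. simpl. destruct (Hpick (S (phi n), S n)) as [H1 _]. simpl in H1. lia.
  - exists l. assert (Hk : forall n, Rabs (u (phi n) - l) < / (INR n + 1)).
    { intros [|n]. simpl. apply (proj2 (Hpick (O, O))). simpl. apply (proj2 (Hpick (S (phi n), S n))). }
    intros e He. destruct (inv_small e He) as [N HN]. exists N. intros n Hn. unfold Rdist.
    specialize (Hk n). specialize (HN n Hn). lra.
Qed.

Lemma BW3 (p : nat -> pt3) C : (forall n, Rabs (fst (fst (p n))) <= C /\ Rabs (snd (fst (p n))) <= C /\ Rabs (snd (p n)) <= C) ->
  exists c, forall e, 0 < e -> forall N, exists n, (N <= n)%nat /\ dist3 (p n) c < e.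
Proof.
  intros Hb.
  destruct (subseq_conv (fun n => fst (fst (p n))) C) as [f1 [Hf1 [l1 Hl1]]]. intros; apply Hb.
  destruct (subseq_conv (fun n => snd (fst (p (f1 n)))) C) as [f2 [Hf2 [l2 Hl2]]]. intros; apply Hb.
  destruct (subseq_conv (fun n => snd (p (f1 (f2 n)))) C) as [f3 [Hf3 [l3 Hl3]]]. intros; apply Hb.
  exists ((l1, l2), l3). intros e He N.
  assert (Hi23 : forall n, (f2 (f3 n) < f2 (f3 (S n)))%nat).
  { intros n. specialize (Hf3 n). pose proof (incr_mono f2 Hf2 (S (f3 n)) (f3 (S n)) ltac:(lia)).
    specialize (Hf2 (f3 n)). lia. }
  pose proof (Un_cv_sub _ _ _ Hi23 Hl1) as C1. pose proof (Un_cv_sub _ _ _ Hf3 Hl2) as C2.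
  destruct (C1 (e/3) ltac:(lra)) as [K1 HK1]. destruct (C2 (e/3) ltac:(lra)) as [K2 HK2].
  destruct (Hl3 (e/3) ltac:(lra)) as [K3 HK3].
  set (k := max N (max K1 (max K2 K3))).
  exists (f1 (f2 (f3 k))). split.
  - pose proof (incr_ge f1 Hf1 (f2 (f3 k))). pose proof (incr_ge f2 Hf2 (f3 k)). pose proof (incr_ge f3 Hf3 k).
    unfold k in *. lia.
  - specialize (HK1 k ltac:(unfold k; lia)). specialize (HK2 k ltac:(unfold k; lia)). specialize (HK3 k ltac:(unfold k; lia)).
    unfold Rdist in *. simpl in *.
    eapply Rle_lt_trans. apply d3_le. eapply Rle_lt_trans. apply Rplus_le_compat_r. apply d2_le_abs. simpl. lra.
Qed.

Lemma closure_bounded U : bounded2 U -> exists C, forall P, closure2 U P -> Rabs (fst P) <= C /\ Rabs (snd P) <= C.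
Proof.
  intros [M HM]. exists (M + 1). intros P HP. destruct (HP 1 ltac:(lra)) as [q [Hq Hd]].
  pose proof (HM q Hq). pose proof (d2_tri P q (0,0)).
  pose proof (abs_fst_le_d2 P (0,0)). pose proof (abs_snd_le_d2 P (0,0)). simpl in *.
  rewrite Rminus_0_r in *. lra.
Qed.

Lemma bound_time U H : bounded2 U -> cont3_on (SK U) H ->
  forall S, exists B, forall p, SK U p -> Rabs (snd p) <= S -> Rabs (snd (H p)) <= B.
Proof.
  intros Hb Hc S. apply NNPP. intros Hno.
  assert (Hp : forall n : nat, exists p, SK U p /\ Rabs (snd p) <= S /\ INR n < Rabs (snd (H p))).
  { intros n. apply NNPP. intros Hn. apply Hno. exists (INR n). intros p Hp Hs.
    destruct (Rle_lt_dec (Rabs (snd (H p))) (INR n)); auto. exfalso. apply Hn. exists p. auto. }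
  destruct (choice _ Hp) as [p Hp'].
  destruct (closure_bounded U Hb) as [C HC].
  destruct (BW3 p (Rmax C S)) as [c Hcl].
  { intros n. destruct (Hp' n) as [HK [HS _]]. destruct (HC _ HK).
    pose proof (Rmax_l C S). pose proof (Rmax_r C S). repeat split; lra. }
  assert (HcK : SK U c).
  { intros e He. destruct (Hcl (e/2) ltac:(lra) O) as [n [_ Hn]].
    destruct (Hp' n) as [HK _]. destruct (HK (e/2) ltac:(lra)) as [q [Hq Hdq]].
    exists q. split; auto. eapply Rle_lt_trans. apply d2_tri with (q := fst (p n)).
    pose proof (d2_le_d3 c (p n)). rewrite d3_sym in Hn. lra. }
  destruct (Hc c HcK 1 ltac:(lra)) as [dl [Hdl Hdl']].
  destruct (nat_above (Rabs (snd (H c)) + 1)) as [N HN].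
  destruct (Hcl dl Hdl N) as [n [Hn Hdn]].
  destruct (Hp' n) as [HK [_ Hbig]].
  rewrite d3_sym in Hdn. specialize (Hdl' (p n) HK Hdn).
  pose proof (abs_snd_le_d3 (H c) (H (p n))).
  pose proof (Rabs_triang_inv (snd (H (p n))) (snd (H c))).
  rewrite <- Rabs_Ropp in H0. replace (- (snd (H c) - snd (H (p n)))) with (snd (H (p n)) - snd (H c)) in H0 by ring.
  apply le_INR in Hn. lra.
Qed.

Definition clamp r := Rmax 0 (Rmin 1 r).
Lemma clamp_in r : 0 <= clamp r <= 1.
Proof. unfold clamp, Rmax, Rmin. repeat destruct Rle_dec; lra. Qed.
Lemma clamp_id r : 0 <= r <= 1 -> clamp r = r.
Proof. unfold clamp, Rmax, Rmin. repeat destruct Rle_dec; lra. Qed.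
Lemma clamp_lip r r' : Rabs (clamp r - clamp r') <= Rabs (r - r').
Proof. unfold clamp, Rmax, Rmin, Rabs. repeat destruct Rle_dec; repeat destruct Rcase_abs; lra. Qed.

Definition far (b : bool) t T := if b then T < t else t < - T.

Lemma far_abs b t T : far b t T -> T < Rabs t.
Proof. unfold far, Rabs; destruct b, Rcase_abs; lra. Qed.
Lemma far_mono b t T T' : T' <= T -> far b t T -> far b t T'.
Proof. unfold far; destruct b; lra. Qed.

Lemma far_conv b s u T r : 0 <= r <= 1 -> far b s T -> far b u T -> far b (s + r * (u - s)) T.
Proof.
  intros Hr Hs Hu. unfold far in *.
  assert (Rmin s u <= s + r * (u - s) <= Rmax s u).
  { unfold Rmin, Rmax. destruct Rle_dec.
    - assert (0 <= r * (u - s)) by (apply Rmult_le_pos; lra).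
      assert (r * (u - s) <= 1 * (u - s)) by (apply Rmult_le_compat_r; lra). lra.
    - assert (r * (s - u) <= 1 * (s - u)) by (apply Rmult_le_compat_r; lra).
      assert (0 <= r * (s - u)) by (apply Rmult_le_pos; lra). lra. }
  unfold Rmin, Rmax in H. destruct b, Rle_dec; lra.
Qed.

Lemma far_sep U H G : bounded2 U -> Good U G -> (forall p, SK U p -> SK U (H p)) ->
  (forall p, SK U p -> G (H p) = p) ->
  forall S, exists T, forall p, SK U p -> T < Rabs (snd p) -> S < Rabs (snd (H p)).
Proof.
  intros Hb (GS & Gc & GU) HS Hinv S. destruct (bound_time U G Hb Gc S) as [B HB].
  exists B. intros p Hp HT. destruct (Rle_lt_dec (Rabs (snd (H p))) S); auto.
  specialize (HB (H p) (HS p Hp) r). rewrite Hinv in HB; auto. lra.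
Qed.

Lemma no_cross U H T x y g b s u : Good U H ->
  (forall p, SK U p -> T < Rabs (snd p) -> snd (H p) <> 0) ->
  is_path_in U x y g -> far b s T -> far b u T ->
  ~ (0 < snd (H (x, s)) /\ snd (H (y, u)) < 0).
Proof.
  intros HG Hnz Hp Hs Hu [A B].
  pose proof Hp as (Hg0 & Hg1 & HgU & Hgc).
  set (f := fun r => - snd (H (g (clamp r), s + clamp r * (u - s)))).
  assert (Hf : continuity f).
  { intros x0. unfold continuity_pt, continue_in, limit1_in, limit_in. simpl. intros e He.
    destruct (path_img_cont U H g x y s u HG Hp (clamp x0) (clamp_in x0) e He) as [dl [Hdl Hdl']].
    exists dl. split; auto. intros x' [_ Hx']. unfold Rdist in *. unfold f.
    specialize (Hdl' (clamp x') (clamp_in x')).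
    assert (Rabs (clamp x0 - clamp x') < dl).
    { rewrite Rabs_minus_sym. eapply Rle_lt_trans. apply clamp_lip. auto. }
    specialize (Hdl' H0). pose proof (abs_snd_le_d3 (H (g (clamp x0), s + clamp x0 * (u - s))) (H (g (clamp x'), s + clamp x' * (u - s)))).
    replace (- snd (H (g (clamp x'), s + clamp x' * (u - s))) - - snd (H (g (clamp x0), s + clamp x0 * (u - s))))
      with (snd (H (g (clamp x0), s + clamp x0 * (u - s))) - snd (H (g (clamp x'), s + clamp x' * (u - s)))) by ring.
    lra. }
  assert (F0 : f 0 < 0).
  { unfold f. rewrite clamp_id by lra. rewrite Hg0. replace (s + 0 * (u - s)) with s by ring. lra. }
  assert (F1 : 0 < f 1).
  { unfold f. rewrite clamp_id by lra. rewrite Hg1. replace (s + 1 * (u - s)) with u by ring. lra. }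
  destruct (IVT f 0 1 Hf ltac:(lra) F0 F1) as [z [Hz Hfz]].
  unfold f in Hfz. rewrite clamp_id in Hfz by auto.
  apply (Hnz (g z, s + z * (u - s))).
  - unfold SK; simpl. apply U_closure; auto.
  - simpl. apply far_abs with b. apply far_conv; auto.
  - lra.
Qed.

Definition maps_endY U (H : pt3 -> pt3) b c := forall M, exists T, forall p, SK U p -> U (fst p) ->
  far b (snd p) T -> far c (snd (H p)) M.

Lemma end_map U H G x0 : bounded2 U -> Good U H -> Good U G -> (forall p, SK U p -> G (H p) = p) ->
  (forall x y, U x -> U y -> exists g, is_path_in U x y g) -> U x0 ->
  forall b, exists c, maps_endY U H b c.
Proof.
  intros Hb HG GG Hinv Hpc Hx0 b. pose proof HG as (HS & Hc & HU).
  destruct (far_sep U H G Hb GG HS Hinv 0) as [T0 HT0].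
  assert (Hnz : forall p, SK U p -> T0 < Rabs (snd p) -> snd (H p) <> 0).
  { intros p Hp Ht E. specialize (HT0 p Hp Ht). rewrite E, Rabs_R0 in HT0. lra. }
  pose proof Hnz as Hnz'.
  set (t0 := if b then Rabs T0 + 1 else - (Rabs T0 + 1)).
  assert (Ht0 : far b t0 T0) by (unfold far, t0; destruct b; unfold Rabs; destruct Rcase_abs; lra).
  assert (Ha0 : SK U (x0, t0)) by (unfold SK; simpl; apply U_closure; auto).
  assert (Hnz0 := Hnz (x0, t0) Ha0 (far_abs _ _ _ Ht0)).
  exists (if Rlt_dec 0 (snd (H (x0, t0))) then true else false).
  intros M. destruct (far_sep U H G Hb GG HS Hinv (Rabs M)) as [T1 HT1].
  exists (Rmax T0 T1). intros [x t] Hp HpU Hfar. simpl in *.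
  pose proof (far_mono b t _ T0 (Rmax_l T0 T1) Hfar) as F0.
  pose proof (far_mono b t _ T1 (Rmax_r T0 T1) Hfar) as F1.
  specialize (HT1 (x, t) Hp (far_abs _ _ _ F1)).
  specialize (Hnz (x, t) Hp (far_abs _ _ _ F0)). simpl in Hnz.
  destruct (Hpc x0 x Hx0 HpU) as [g1 Hg1]. destruct (Hpc x x0 HpU Hx0) as [g2 Hg2].
  pose proof (Rle_abs M). pose proof (Rabs_pos M).
  destruct (Rlt_dec 0 (snd (H (x0, t0)))) as [Hpos|Hneg]; unfold far; simpl.
  - destruct (Rlt_dec (snd (H (x, t))) 0) as [Hn|Hn].
    + exfalso. apply (no_cross U H T0 x0 x g1 b t0 t HG Hnz' Hg1 Ht0 F0). auto.
    + apply Rnot_lt_le in Hn. rewrite (Rabs_right (snd (H (x, t)))) in HT1 by lra. lra.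
  - destruct (Rlt_dec 0 (snd (H (x, t)))) as [Hn|Hn].
    + exfalso. apply (no_cross U H T0 x x0 g2 b t t0 HG Hnz' Hg2 F0 Ht0). split; auto. lra.
    + pose proof (Rle_abs (-M)) as HM. rewrite Rabs_Ropp in HM.
      apply Rnot_lt_le in Hn. rewrite (Rabs_left1 (snd (H (x, t)))) in HT1 by lra. lra.
Qed.

Lemma consist U H G b c e x0 : Good U H -> (forall p, SK U p -> G (H p) = p) -> U x0 ->
  maps_endY U H b c -> maps_endY U G c e -> e = b.
Proof.
  intros (HS & Hc & HU) Hinv Hx0 Hh Hg.
  destruct (Bool.bool_dec e b) as [|Hne]; auto. exfalso.
  destruct (Hg 0) as [TG HTG]. destruct (Hh TG) as [TH HTH].
  set (t := if b then Rabs TH + 1 else - (Rabs TH + 1)).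
  assert (Ft : far b t TH) by (unfold far, t; destruct b; unfold Rabs; destruct Rcase_abs; lra).
  assert (Hp : SK U (x0, t)) by (unfold SK; simpl; apply U_closure; auto).
  specialize (HTH (x0, t) Hp Hx0 Ft).
  specialize (HTG (H (x0, t)) (HS _ Hp) (HU _ Hp Hx0) HTH).
  rewrite Hinv in HTG by auto. simpl in HTG.
  unfold far, t in *. pose proof (Rabs_pos TH). destruct b, e; try congruence; lra.
Qed.

Definition maps_endX {X} (F : X * R -> X * R) b c := forall M, exists T, forall p,
  far b (snd p) T -> far c (snd (F p)) M.

Lemma endX U X d iota H (HG : Good U H) HU' F b c : is_completion_of_Ustar U X d iota ->
  IsExt (dmax d) (iY iota) (hmap U H HU') F -> maps_endY U H b c -> maps_endX F b c.
Proof.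
  intros HX HF Hy M. pose proof HX as ((Hnn & Hz & Hs & Ht) & _ & Hds & Hden).
  destruct (Hy (M + 1)) as [T HT]. exists T. intros p Hp.
  destruct (HF p (1/2) ltac:(lra)) as [dl [Hdl Hdl']].
  destruct (Hden (fst p) dl Hdl) as [x Hx].
  specialize (Hdl' (x, snd p)). unfold iY, hmap in Hdl'; simpl in Hdl'.
  assert (A : dmax d (iota x, snd p) p < dl).
  { apply dmax_lt; simpl. rewrite Hs; auto. replace (snd p - snd p) with 0 by ring. rewrite Rabs_R0; auto. }
  specialize (Hdl' A).
  pose proof (dmax_snd d (iota (exist U (fst (H (proj1_sig x, snd p))) (HU' x (snd p))), snd (H (proj1_sig x, snd p))) (F p)) as B.
  simpl in B.
  assert (K : far c (snd (H (proj1_sig x, snd p))) (M + 1)).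
  { apply (HT (proj1_sig x, snd p)). unfold SK; simpl. apply U_closure, (proj2_sig x). apply (proj2_sig x). auto. }
  set (a := snd (H (proj1_sig x, snd p))) in *.
  pose proof (Rle_abs (a - snd (F p))). pose proof (Rle_abs (- (a - snd (F p)))). rewrite Rabs_Ropp in H1.
  unfold far in *. destruct c; lra.
Qed.

Definition endpt {A} (b : bool) : ext2 A := if b then PInf else NInf.

Lemma ext_far {X} (d : X -> X -> R) u b : ext_conv d u (endpt b) ->
  forall M, exists N, forall n, (N <= n)%nat -> u n = endpt b \/ exists q, u n = Fin q /\ far b (snd q) M.
Proof.
  destruct b; simpl; intros Hu M.
  - apply Hu.
  - destruct (Hu (- M)) as [N HN]. exists N. intros n Hn. destruct (HN n Hn) as [|[q [E Hq]]]; [left; auto | right; exists q; split; auto].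
Qed.

Lemma far_ext {X} (d : X -> X -> R) u b : (forall M, exists N, forall n, (N <= n)%nat -> u n = endpt b \/ exists q, u n = Fin q /\ far b (snd q) M) ->
  ext_conv d u (endpt b).
Proof.
  destruct b; simpl; intros Hu M.
  - apply Hu.
  - destruct (Hu (- M)) as [N HN]. exists N. intros n Hn. destruct (HN n Hn) as [|[q [E Hq]]]; [left; auto | right; exists q; split; auto].
    unfold far in Hq. lra.
Qed.

Definition Eext {X} (Hs : X * R -> X * R) (cH : bool -> bool) (a : ext2 (X * R)) : ext2 (X * R) :=
  match a with Fin p => Fin (Hs p) | PInf => endpt (cH true) | NInf => endpt (cH false) end.

Lemma Eext_endpt {X} (Hs : X * R -> X * R) cH b : Eext Hs cH (endpt b) = endpt (cH b).
Proof. destruct b; reflexivity. Qed.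

Lemma Eext_conv {X} (d : X -> X -> R) Hs cH : is_metric (dmax d) -> cont_metric (dmax d) (dmax d) Hs ->
  (forall b, maps_endX Hs b (cH b)) ->
  forall u l, ext_conv d u l -> ext_conv d (fun n => Eext Hs cH (u n)) (Eext Hs cH l).
Proof.
  intros (Hnn & Hz & Hs' & Ht) Hc Hend u l Hu. destruct l as [p| |].
  - simpl. intros e He. destruct (Hc p e He) as [dl [Hdl Hdl']].
    destruct (Hu dl Hdl) as [N HN]. exists N. intros n Hn. destruct (HN n Hn) as [q [E Hq]].
    exists (Hs q). rewrite E. split; auto. rewrite Hs'. apply Hdl'. rewrite Hs'. auto.
  - change (ext_conv d (fun n => Eext Hs cH (u n)) (endpt (cH true))). apply far_ext.
    intros M. destruct (Hend true M) as [T HT]. destruct (ext_far d u true Hu T) as [N HN].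
    exists N. intros n Hn. destruct (HN n Hn) as [E|[q [E Hq]]]; rewrite E.
    + left. reflexivity.
    + right. exists (Hs q). split; auto.
  - change (ext_conv d (fun n => Eext Hs cH (u n)) (endpt (cH false))). apply far_ext.
    intros M. destruct (Hend false M) as [T HT]. destruct (ext_far d u false Hu T) as [N HN].
    exists N. intros n Hn. destruct (HN n Hn) as [E|[q [E Hq]]]; rewrite E.
    + left. reflexivity.
    + right. exists (Hs q). split; auto.
Qed.

Lemma E_build {X} (d : X -> X -> R) Hs Gs cH cG : is_metric (dmax d) ->
  cont_metric (dmax d) (dmax d) Hs -> cont_metric (dmax d) (dmax d) Gs ->
  (forall p, Gs (Hs p) = p) -> (forall p, Hs (Gs p) = p) ->
  (forall b, cG (cH b) = b) -> (forall b, cH (cG b) = b) ->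
  (forall b, maps_endX Hs b (cH b)) -> (forall b, maps_endX Gs b (cG b)) ->
  exists E, homeo_ext d E /\ forall p, E (Fin p) = Fin (Hs p).
Proof.
  intros Hm Hc Gc GH HG cGH cHG eH eG.
  exists (Eext Hs cH). split; [|reflexivity].
  exists (Eext Gs cG). repeat split.
  - intros [p| |]; simpl. rewrite GH; auto. rewrite Eext_endpt, cGH; auto. rewrite Eext_endpt, cGH; auto.
  - intros [p| |]; simpl. rewrite HG; auto. rewrite Eext_endpt, cHG; auto. rewrite Eext_endpt, cHG; auto.
  - apply Eext_conv; auto.
  - apply Eext_conv; auto.
Qed.

Lemma sig_ext U (a b : Upts U) : proj1_sig a = proj1_sig b -> a = b.
Proof. destruct a, b; simpl; intros ->. f_equal. apply proof_irrelevance. Qed.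

Theorem mainTheorem5
  (U : pt2 -> Prop)
  (hUb : bounded2 U) (hUo : open2 U) (hUc : contractible2 U)
  (H : pt3 -> pt3)
  (hH : homeo3_on (fun p => closure2 U (fst p)) H)
  (hHU : forall p, closure2 U (fst p) -> (U (fst (H p)) <-> U (fst p)))
  (X : Type) (d : X -> X -> R) (iota : Upts U -> X)
  (hX : is_completion_of_Ustar U X d iota) :
  exists Hs : X * R -> X * R,
    homeo_metric (dmax d) Hs /\
    (forall (x y : Upts U) (t : R),
        fst (H (proj1_sig x, t)) = proj1_sig y ->
        Hs (iota x, t) = (iota y, snd (H (proj1_sig x, t)))) /\
    (forall p : X * R, (forall x, fst p <> iota x) ->
        forall x, fst (Hs p) <> iota x) /\
    (forall q : X * R, (forall x, fst q <> iota x) ->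
        exists p, (forall x, fst p <> iota x) /\ Hs p = q) /\
    (exists E : ext2 (X * R) -> ext2 (X * R),
        homeo_ext d E /\ forall p, E (Fin p) = Fin (Hs p)).
Proof.
  destruct hH as (G & HS & GS & GH & HG & Hc & Gc).
  pose proof hX as (Hmd & Hcd & Hds & Hden).
  assert (GoodH : Good U H).
  { split; [exact HS|split; [exact Hc|]]. intros p Hp Hu. apply (proj2 (hHU p Hp)); auto. }
  assert (GoodG : Good U G).
  { split; [exact GS|split; [exact Gc|]]. intros p Hp Hu. apply (proj1 (hHU (G p) (GS p Hp))).
    rewrite HG; auto. }
  set (hU := good_HU U H GoodH). set (gU := good_HU U G GoodG).
  set (h := hmap U H hU). set (g := hmap U G gU).
  assert (Hm : is_metric (dmax d)) by (apply dmax_metric; auto).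
  assert (Hcm : complete_metric (dmax d)) by (apply dmax_complete; auto).
  assert (Hdn : Dense (dmax d) (iY iota)).
  { intros p e He. destruct (Hden (fst p) e He) as [x Hx]. exists (x, snd p).
    apply dmax_lt; simpl; auto. replace (snd p - snd p) with 0 by ring. rewrite Rabs_R0; auto. }
  destruct (ext_exists _ _ h Hm Hcm Hdn (LC_h U X d iota H GoodH hU hX)) as [Hs HHs].
  destruct (ext_exists _ _ g Hm Hcm Hdn (LC_h U X d iota G GoodG gU hX)) as [Gs HGs].
  pose proof (ext_cont _ _ _ _ Hm Hdn HHs) as Hsc.
  pose proof (ext_cont _ _ _ _ Hm Hdn HGs) as Gsc.
  pose proof (ext_on _ _ _ _ Hm HHs) as Hon.
  pose proof (ext_on _ _ _ _ Hm HGs) as Gon.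
  assert (Hgh : forall a, g (h a) = a).
  { intros [x t]. unfold g, h, hmap; simpl.
    assert (E : (fst (H (proj1_sig x, t)), snd (H (proj1_sig x, t))) = H (proj1_sig x, t)) by (destruct (H (proj1_sig x, t)); auto).
    assert (E2 : G (H (proj1_sig x, t)) = (proj1_sig x, t)).
    { apply GH. simpl. apply U_closure, (proj2_sig x). }
    f_equal. apply sig_ext. simpl. rewrite E, E2. auto. rewrite E, E2. auto. }
  assert (Hhg : forall a, h (g a) = a).
  { intros [x t]. unfold g, h, hmap; simpl.
    assert (E : (fst (G (proj1_sig x, t)), snd (G (proj1_sig x, t))) = G (proj1_sig x, t)) by (destruct (G (proj1_sig x, t)); auto).
    assert (E2 : H (G (proj1_sig x, t)) = (proj1_sig x, t)).
    { apply HG. simpl. apply U_closure, (proj2_sig x). }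
    f_equal. apply sig_ext. simpl. rewrite E, E2. auto. rewrite E, E2. auto. }
  assert (GsHs : forall p, Gs (Hs p) = p).
  { apply (dense_id _ _ (fun p => Gs (Hs p)) Hm Hdn). apply cont_comp; auto.
    intros a. rewrite Hon, Gon, Hgh. auto. }
  assert (HsGs : forall p, Hs (Gs p) = p).
  { apply (dense_id _ _ (fun p => Hs (Gs p)) Hm Hdn). apply cont_comp; auto.
    intros a. rewrite Gon, Hon, Hhg. auto. }
  assert (Bd : forall (F1 F2 : X * R -> X * R) (k : Upts U * R -> Upts U * R),
    (forall p, F2 (F1 p) = p) -> (forall a, F2 (iY iota a) = iY iota (k a)) ->
    forall p, (forall x, fst p <> iota x) -> forall x, fst (F1 p) <> iota x).
  { intros F1 F2 k Hinv Hk p Hb x Hx. apply (Hb (fst (k (x, snd (F1 p))))).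
    assert (Ep : F1 p = iY iota (x, snd (F1 p))) by (unfold iY; simpl; rewrite <- Hx; destruct (F1 p); auto).
    assert (Ep2 : p = iY iota (k (x, snd (F1 p)))) by (rewrite <- Hk, <- Ep; auto).
    rewrite Ep2 at 1. reflexivity. }
  exists Hs. split; [|split; [|split; [|split]]].
  - exists Gs. auto.
  - intros x y t E. change (iota x, t) with (iY iota (x, t)). rewrite Hon.
    unfold iY, h, hmap; simpl. f_equal. apply (iota_eq U X d iota hX). simpl. auto.
  - apply (Bd Hs Gs g GsHs Gon).
  - intros q Hq. exists (Gs q). split; auto. apply (Bd Gs Hs h HsGs Hon). auto.
  - destruct (classic (exists x0, U x0)) as [[x0 Hx0]|Hno].
    + assert (Hpc : forall x y, U x -> U y -> exists g, is_path_in U x y g).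
      { intros x y Hx Hy. apply (dstar_ex U x y _ (Hds (exist U x Hx) (exist U y Hy))). }
      destruct (choice _ (end_map U H G x0 hUb GoodH GoodG GH Hpc Hx0)) as [cH HcH].
      destruct (choice _ (end_map U G H x0 hUb GoodG GoodH HG Hpc Hx0)) as [cG HcG].
      apply (E_build d Hs Gs cH cG); auto.
      * intros b. apply (consist U H G b (cH b) (cG (cH b)) x0 GoodH GH Hx0); auto.
      * intros b. apply (consist U G H b (cG b) (cH (cG b)) x0 GoodG HG Hx0); auto.
      * intros b. apply (endX U X d iota H GoodH hU Hs b (cH b) hX HHs); auto.
      * intros b. apply (endX U X d iota G GoodG gU Gs b (cG b) hX HGs); auto.
    + apply (E_build d Hs Gs (fun b => b) (fun b => b)); auto.
      * intros b M. exists 0. intros p. exfalso. destruct (Hden (fst p) 1 ltac:(lra)) as [x _].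
        apply Hno. exists (proj1_sig x). apply (proj2_sig x).
      * intros b M. exists 0. intros p. exfalso. destruct (Hden (fst p) 1 ltac:(lra)) as [x _].
        apply Hno. exists (proj1_sig x). apply (proj2_sig x).
Qed.
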